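(* Let $\mathcal E$ be a Hilbert space, $U\in\mathcal B(\mathcal E)$ a unitary and $P\in\mathcal B(\mathcal E)$ an orthogonal projection, and let $\pi(z)=U(P^\perp+zP)$ for $z\in\mathbb D$, where $P^\perp=I-P$. Then $1$ is an eigenvalue of $\pi(z)$ for some $z\in\mathbb D$ if and only if there is a non-zero $x\in\operatorname{ran}(P^\perp)$ with $Ux=x$.
   Context: $\mathbb D$ denotes the open unit disc. *)

(* Defs.v *)
From HB Require Import structures.
From mathcomp Require Import all_boot all_order all_algebra.
From mathcomp Require Import reals.
From mathcomp Require Import complex.
Set Implicit Arguments. Unset Strict Implicit. Unset Printing Implicit Defensive.
Import Order.TTheory GRing.Theory Num.Theory.
Local Open Scope ring_scope.

Section Hilbert.
Variables (R : realType) (E : lmodType R[i]) (ip : E -> E -> R[i]).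

Definition inner_product : Prop :=
  [/\ forall (a : R[i]) x y z, ip (a *: x + y) z = a * ip x z + ip y z,
      forall x y, ip x y = conjc (ip y x),
      forall x, 0 <= ip x x
    & forall x, ip x x = 0 -> x = 0].

Definition hnorm (x : E) : R := Num.sqrt (@complex.Re R (ip x x)).

Definition hcauchy (u : nat -> E) : Prop :=
  forall eps : R, 0 < eps -> exists N : nat,
    forall m n, (N <= m)%N -> (N <= n)%N -> hnorm (u m - u n) < eps.

Definition hconverges (u : nat -> E) (l : E) : Prop :=
  forall eps : R, 0 < eps -> exists N : nat,
    forall n, (N <= n)%N -> hnorm (u n - l) < eps.

Definition hcomplete : Prop :=
  forall u, hcauchy u -> exists l, hconverges u l.

Definition hilbert_space : Prop := inner_product /\ hcomplete.

Definition is_linear_op (T : E -> E) : Prop :=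
  forall (a : R[i]) x y, T (a *: x + y) = a *: T x + T y.

Definition bounded_op (T : E -> E) : Prop :=
  is_linear_op T /\ exists M : R, forall x, hnorm (T x) <= M * hnorm x.

Definition is_adjoint (T S : E -> E) : Prop :=
  forall x y, ip (T x) y = ip x (S y).

Definition unitary (U : E -> E) : Prop :=
  bounded_op U /\ exists Us : E -> E,
    is_adjoint U Us /\ (forall x, Us (U x) = x) /\ (forall x, U (Us x) = x).

Definition orth_projection (P : E -> E) : Prop :=
  bounded_op P /\ (forall x, P (P x) = P x) /\ is_adjoint P P.

Definition pencil (U P : E -> E) (z : R[i]) : E -> E :=
  fun x => U ((x - P x) + z *: P x).

Definition op_eigenvalue (T : E -> E) (lambda : R[i]) : Prop :=
  exists x, x != 0 /\ T x = lambda *: x.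

End Hilbert.

(* Main.v *)
Require Import Defs.
From HB Require Import structures.
From mathcomp Require Import all_boot all_order all_algebra.
From mathcomp Require Import reals.
From mathcomp Require Import complex.
Import Order.TTheory GRing.Theory Num.Theory.
Local Open Scope ring_scope.

Section Aux.
Variables (R : realType) (E : lmodType R[i]).

Lemma lin0 (T : E -> E) : is_linear_op T -> T 0 = 0.
Proof. move=> H; have := H (-1) 0 0; rewrite scaler0 addr0 scaleN1r addNr //. Qed.

Lemma linB (T : E -> E) x y : is_linear_op T -> T (x - y) = T x - T y.
Proof. move=> H; have := H (-1) y x; rewrite !scaleN1r addrC => ->; by rewrite addrC. Qed.
End Aux.

Theorem lemma2p3 (R : realType) (E : lmodType R[i]) (ip : E -> E -> R[i])
    (U P : E -> E) :
  hilbert_space ip -> unitary ip U -> orth_projection ip P ->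
  (exists z : R[i], `|z| < 1 /\ op_eigenvalue (pencil U P z) 1) <->
  (exists x : E, x != 0 /\ (exists y : E, x = y - P y) /\ U x = x).
Proof.
move=> [[ipl ips ippos ipdef] _] [[Ulin _] [Us [Uadj [UsU _]]]] [[Plin _] [PP Padj]].
split.
- move=> [z [zlt [x [xn0 Hx]]]].
  rewrite /pencil scale1r in Hx.
  set a := x - P x in Hx; set b := P x in Hx.
  have Pa : P a = 0 by rewrite /a linB // PP subrr.
  have ip0l : forall v, ip 0 v = 0.
    by move=> v; have := ipl 1 0 0 v; rewrite scaler0 addr0 mul1r => h; apply: (addrI (ip 0 v)); rewrite addr0 -{1}h.
  have iplD : forall u v w, ip (u + v) w = ip u w + ip v w.
    by move=> u v w; have := ipl 1 u v w; rewrite scale1r mul1r.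
  have iplZ : forall c u w, ip (c *: u) w = c * ip u w.
    by move=> c u w; have := ipl c u 0 w; rewrite addr0 ip0l addr0.
  have ab : ip a b = 0 by rewrite /b -Padj Pa ip0l.
  have ba : ip b a = 0 by rewrite ips ab conjc0.
  have ipaa : ip a a = (ip a a)^* by rewrite {1}ips.
  have xab : x = a + b by rewrite /a subrK.
  have bdef : b = P x by [].
  clearbody a b.
  have Uw : ip (U (a + z *: b)) (U (a + z *: b)) = ip (a + z *: b) (a + z *: b)
    by rewrite Uadj UsU.
  have ww : ip (a + z *: b) (a + z *: b) = ip a a + z * z^* * ip b b.
    rewrite iplD iplZ (ips a) (ips b) iplD iplD iplZ iplZ ba ab mulr0 !addr0 add0r.
    by rewrite rmorphM /= -!ips mulrA.
  have xx : ip x x = ip a a + ip b b.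
    by rewrite xab iplD (ips a) (ips b) !iplD ab ba add0r addr0 -!ips.
  have bb : ip b b = 0.
    move: Uw; rewrite Hx xx ww => /addrI /eqP.
    rewrite -subr_eq0 -{1}(mul1r (ip b b)) -mulrBl mulf_eq0 => /orP [|/eqP //].
    rewrite subr_eq0 -normCK => /eqP h.
    have : `|z| ^+ 2 < 1 by rewrite expr2 (le_lt_trans _ zlt) // ler_piMr // ltW.
    by rewrite -h ltxx.
  have b0 : b = 0 by apply: ipdef.
  have ax : a = x by rewrite xab b0 addr0.
  exists x; split => //; split; first by exists x; rewrite -bdef b0 subr0.
  by move: Hx; rewrite b0 scaler0 !addr0 ax.
- move=> [x [xn0 [[y xe] Ux]]].
  exists 0; split; first by rewrite normr0 ltr01.
  exists x; split => //; rewrite /pencil.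
  have P0 : P x = 0 by rewrite xe linB // PP subrr.
  rewrite P0 scale0r subr0 addr0 scale1r; exact: Ux.
Qed.
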